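(* Let $g:\mathbb{R}^m\to\overline{\mathbb{R}}$ be a polyhedral function and $(\bar z,\bar\lambda)\in\mathrm{gph}\,\partial g$. Then: (a) there exists $r>0$ such that for all $(z,\lambda)\in(\mathrm{gph}\,\partial g)\cap\mathbb{B}_r(\bar z,\bar\lambda)$, $$K_g(z,\lambda)\subset K_g(\bar z,\bar\lambda)-K_g(\bar z,\bar\lambda)\quad\text{and}\quad K_g(\bar z,\bar\lambda)\cap -K_g(\bar z,\bar\lambda)\subset K_g(z,\lambda);$$ (b) if in addition $\bar\lambda\in\mathrm{ri}\,\partial g(\bar z)$, then there exists $r>0$ such that for all $(z,\lambda)\in(\mathrm{gph}\,\partial g)\cap\mathbb{B}_r(\bar z,\bar\lambda)$ we have $\lambda\in\mathrm{ri}\,\partial g(z)$ and $K_g(z,\lambda)=K_g(\bar z,\bar\lambda)$.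
   Context: A proper function $g:\mathbb{R}^m\to\overline{\mathbb{R}}$ is polyhedral if its epigraph is a polyhedral convex set; $\partial g$ is the convex-analysis subdifferential and $\mathrm{ri}$ denotes relative interior. For $z$ with $g(z)$ finite, ${\rm d} g(z)(w)=\liminf_{t\searrow 0,\,w'\to w}\frac{g(z+tw')-g(z)}{t}$, and for $\lambda\in\partial g(z)$ the critical cone is $K_g(z,\lambda)=\{w\mid\langle\lambda,w\rangle={\rm d} g(z)(w)\}$ (equal to $N_{\partial g(z)}(\lambda)$ for convex $g$). $\mathbb{B}_r(\cdot)$ denotes a closed ball in $\mathbb{R}^m\times\mathbb{R}^m$ with the Euclidean product norm. *)

(* Defs.v *)
From HB Require Import structures.
From mathcomp Require Import all_boot all_order all_algebra.
From mathcomp Require Import all_classical all_reals all_analysis.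
Set Implicit Arguments. Unset Strict Implicit. Unset Printing Implicit Defensive.
Import Order.TTheory GRing.Theory Num.Theory.
Local Open Scope classical_set_scope.
Local Open Scope ring_scope.

Section Defs.
Variables (R : realType) (m : nat).
Notation vec := 'rV[R]_m.

Definition inner (u v : vec) : R := \sum_(i < m) u 0 i * v 0 i.
Definition sqnorm (u : vec) : R := inner u u.
Definition vnorm (u : vec) : R := Num.sqrt (sqnorm u).

Definition proper_fun (g : vec -> \bar R) : Prop :=
  (forall z, g z <> -oo%E) /\ exists z, g z \is a fin_num.

Definition epigraph (g : vec -> \bar R) : set (vec * R) :=
  [set p | (g p.1 <= p.2%:E)%E].

Definition polyhedral_set (C : set (vec * R)) : Prop :=
  exists (k : nat) (A : 'I_k -> vec) (c b : 'I_k -> R),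
    forall p : vec * R, C p <-> (forall i, inner (A i) p.1 + c i * p.2 <= b i).

Definition polyhedral_fun (g : vec -> \bar R) : Prop :=
  proper_fun g /\ polyhedral_set (epigraph g).

Definition subdiff (g : vec -> \bar R) (z : vec) : set vec :=
  [set l | g z \is a fin_num /\
           forall w, g z + (inner l (w - z)%R)%:E <= g w]%E.

(* subderivative dg(z)(w) = liminf_{t \searrow 0, w' -> w} (g(z + t w') - g(z)) / t *)
Definition subderiv (g : vec -> \bar R) (z w : vec) : \bar R :=
  ereal_sup [set ereal_inf
     [set x | exists (t : R) (w' : vec),
         0 < t < e /\ vnorm (w' - w) < e /\
         x = ((g (z + t *: w')%R - g z) * (t^-1)%:E)%E]
   | e in [set e : R | 0 < e]].

Definition crit_cone (g : vec -> \bar R) (z l : vec) : set vec :=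
  [set w | (inner l w)%:E = subderiv g z w].

Definition aff_hull (C : set vec) : set vec :=
  [set x | exists (n : nat) (c : 'I_n -> vec) (mu : 'I_n -> R),
      (forall i, C (c i)) /\ \sum_(i < n) mu i = 1 /\
      x = \sum_(i < n) mu i *: c i].

Definition rel_int (C : set vec) : set vec :=
  [set x | C x /\ exists e : R, 0 < e /\
      forall y, aff_hull C y -> vnorm (y - x) < e -> C y].

Definition set_diff_minkowski (K : set vec) : set vec :=
  [set x | exists u v, K u /\ K v /\ x = u - v].

Definition set_opp (K : set vec) : set vec := [set x | K (- x)].

Definition in_ball2 (r : R) (zb lb z l : vec) : Prop :=
  sqnorm (z - zb) + sqnorm (l - lb) <= r ^+ 2.

End Defs.

(* Main.v *)
Require Import Defs.
From HB Require Import structures.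
From mathcomp Require Import all_boot all_order all_algebra.
From mathcomp Require Import all_classical all_reals all_analysis.
From mathcomp Require Import ring lra.
Set Implicit Arguments. Unset Strict Implicit. Unset Printing Implicit Defensive.
Import Order.TTheory GRing.Theory Num.Theory.
Local Open Scope classical_set_scope.
Local Open Scope ring_scope.

Section Basics.
Variables (R : realType) (m : nat).
Local Notation vec := 'rV[R]_m.

Lemma inner_addl (a b v : vec) : inner (a + b) v = inner a v + inner b v.
Proof. rewrite /inner -big_split; apply: eq_bigr => i _; by rewrite !mxE mulrDl. Qed.
Lemma inner_addr (a v w : vec) : inner a (v + w) = inner a v + inner a w.
Proof. rewrite /inner -big_split; apply: eq_bigr => i _; by rewrite !mxE mulrDr. Qed.
Lemma inner_scalel s (a v : vec) : inner (s *: a) v = s * inner a v.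
Proof. rewrite /inner mulr_sumr; apply: eq_bigr => i _; by rewrite !mxE mulrA. Qed.
Lemma inner_scaler s (a v : vec) : inner a (s *: v) = s * inner a v.
Proof. rewrite /inner mulr_sumr; apply: eq_bigr => i _; by rewrite !mxE mulrCA. Qed.
Lemma inner_sym (a v : vec) : inner a v = inner v a.
Proof. rewrite /inner; apply: eq_bigr => i _; by rewrite mulrC. Qed.
Lemma inner_oppr (a v : vec) : inner a (- v) = - inner a v.
Proof. by rewrite -scaleN1r inner_scaler mulN1r. Qed.
Lemma inner_oppl (a v : vec) : inner (- a) v = - inner a v.
Proof. by rewrite -scaleN1r inner_scalel mulN1r. Qed.
Lemma inner_subr (a v w : vec) : inner a (v - w) = inner a v - inner a w.
Proof. by rewrite inner_addr inner_oppr. Qed.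
Lemma inner_subl (a b v : vec) : inner (a - b) v = inner a v - inner b v.
Proof. by rewrite inner_addl inner_oppl. Qed.
Lemma inner0r (a : vec) : inner a 0 = 0.
Proof. by rewrite /inner big1 // => i _; rewrite mxE mulr0. Qed.

Lemma sqnorm_ge0 (v : vec) : 0 <= sqnorm v.
Proof. by rewrite /sqnorm /inner; apply: sumr_ge0 => i _; rewrite -expr2 sqr_ge0. Qed.

Lemma inner_amgm (a v : vec) s : 0 < s ->
  2 * inner a v <= s * sqnorm a + sqnorm v / s.
Proof.
move=> s0; rewrite /sqnorm /inner mulr_sumr mulr_sumr mulr_suml -big_split /=.
apply: ler_sum => i _.
have h : 0 <= (s * a 0 i - v 0 i) ^+ 2 / s by rewrite divr_ge0 ?sqr_ge0 ?ltW.
have -> : s * (a 0 i * a 0 i) + v 0 i * v 0 i / s =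
   (s * a 0 i - v 0 i) ^+ 2 / s + 2 * (a 0 i * v 0 i).
  by field; rewrite gt_eqF.
by rewrite lerDr.
Qed.

Lemma inner_small (a : vec) d : 0 < d ->
  exists2 eta, 0 < eta & forall v, sqnorm v < eta -> inner a v < d.
Proof.
move=> d0; set s := d / (sqnorm a + 1).
have N0 := sqnorm_ge0 a.
have s0 : 0 < s by rewrite divr_gt0 // ltr_wpDl.
exists (d * s); first by rewrite mulr_gt0.
move=> v hv.
have h := inner_amgm a v s0.
have h1 : s * sqnorm a < d.
  rewrite /s mulrAC ltr_pdivrMr ?ltr_wpDl //.
  by rewrite ltr_pM2l // ltrDl.
have h2 : sqnorm v / s < d by rewrite ltr_pdivrMr // mulrC.
have : 2 * inner a v < d + d by apply: (le_lt_trans h); rewrite ltrD.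
move=> H; lra.
Qed.

Lemma sqnorm_add_le (p q : vec) : sqnorm (p + q) <= 2 * (sqnorm p + sqnorm q).
Proof.
rewrite /sqnorm /inner -big_split /= mulr_sumr; apply: ler_sum => i _.
rewrite !mxE; have := sqr_ge0 (p 0 i - q 0 i); rewrite expr2 => H; nra.
Qed.

Lemma sqnorm_scale s (v : vec) : sqnorm (s *: v) = s ^+ 2 * sqnorm v.
Proof. by rewrite /sqnorm inner_scalel inner_scaler mulrA expr2. Qed.

Lemma vnorm_lt (v : vec) e : 0 < e -> (vnorm v < e) = (sqnorm v < e ^+ 2).
Proof.
move=> e0; rewrite /vnorm -{1}(ger0_norm (ltW e0)) -sqrtr_sqr ltr_sqrt //.
by rewrite exprn_gt0.
Qed.

Lemma subrr_vec (v : vec) : sqnorm (v - v) = 0.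
Proof. by rewrite subrr /sqnorm inner0r. Qed.

Lemma fin_eps (T : finType) (P : T -> R -> Prop) :
  (forall i, exists2 e, 0 < e & forall e', 0 < e' <= e -> P i e') ->
  exists2 e, 0 < e & forall e', 0 < e' <= e -> forall i, P i e'.
Proof.
move=> H.
suff : forall s : seq T, exists2 e, 0 < e & forall e', 0 < e' <= e -> forall i, i \in s -> P i e'.
  by case/(_ (enum T)) => e e0 He; exists e => // e' he' i; apply: He => //; rewrite mem_enum.
elim=> [|x s [e e0 He]]; first by exists 1 => //.
have [ex ex0 Hx] := H x.
exists (Num.min e ex); first by rewrite lt_min e0 ex0.
move=> e' /andP[e'0]; rewrite le_min => /andP[h1 h2] i; rewrite inE => /orP[/eqP->|hi].
  by apply: Hx; rewrite e'0 h2.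
by apply: He => //; rewrite e'0 h1.
Qed.

Lemma small_t (k : nat) (P : 'I_k -> Prop) (al be : 'I_k -> R) :
  (forall i, P i -> al i <= 0 /\ (al i = 0 -> be i <= 0)) ->
  exists2 t0, 0 < t0 & forall t, 0 < t <= t0 -> forall i, P i -> al i + t * be i <= 0.
Proof.
move=> H; apply: (fin_eps (P := fun i t => P i -> al i + t * be i <= 0)) => i.
have [Pi|nPi] := pselect (P i); last by exists 1 => // e' _ /nPi.
have [a0 ha] := H i Pi.
have [e0|aneq] := eqVneq (al i) 0.
  exists 1 => // t /andP[t0 _] _; rewrite e0 add0r.
  by apply: mulr_ge0_le0; [exact: ltW | exact: ha].
have an : al i < 0 by rewrite lt_neqAle aneq a0.
exists (- al i / (`|be i| + 1)); first by rewrite divr_gt0 ?oppr_gt0 // ltr_wpDl.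
move=> t /andP[t0 ht] _.
have h1 : t * be i <= t * `|be i| by rewrite ler_pM2l // ler_norm.
have h2 : t * `|be i| <= - al i.
  have hb : 0 < `|be i| + 1 by rewrite ltr_wpDl.
  rewrite ler_pdivlMr // in ht.
  apply: le_trans ht; rewrite ler_pM2l // lerDl //.
by rewrite -lerBrDl sub0r (le_trans h1 h2).
Qed.

End Basics.

Section Poly.
Variables (R : realType) (m k : nat).
Local Notation vec := 'rV[R]_m.
Variables (g : vec -> \bar R) (A : 'I_k -> vec) (c b : 'I_k -> R).
Hypothesis Hepi : forall x t, (g x <= t%:E)%E <-> (forall i, inner (A i) x + c i * t <= b i).
Hypothesis Hnm : forall x, g x <> -oo%E.
Hypothesis Hfin : exists z, g z \is a fin_num.

Definition vi i (w : vec) (s : R) := inner (A i) w + c i * s.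
Definition TT (z : vec) (tau : R) (w : vec) (s : R) :=
  forall i, vi i z tau = b i -> vi i w s <= 0.

Lemma vi_lin i w1 s1 w2 s2 t : vi i (w1 + t *: w2) (s1 + t * s2) = vi i w1 s1 + t * vi i w2 s2.
Proof. rewrite /vi inner_addr inner_scaler; ring. Qed.
Lemma vi_sub i w1 s1 w2 s2 : vi i (w1 - w2) (s1 - s2) = vi i w1 s1 - vi i w2 s2.
Proof. rewrite /vi inner_subr; ring. Qed.
Lemma vi_opp i w s : vi i (- w) (- s) = - vi i w s.
Proof. rewrite /vi inner_oppr; ring. Qed.
Lemma vi_scale i w s a : vi i (a *: w) (a * s) = a * vi i w s.
Proof. rewrite /vi inner_scaler; ring. Qed.
Lemma vi_add i w1 s1 w2 s2 : vi i (w1 + w2) (s1 + s2) = vi i w1 s1 + vi i w2 s2.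
Proof. rewrite /vi inner_addr; ring. Qed.

Lemma epi_fin x tau : g x = tau%:E -> forall i, vi i x tau <= b i.
Proof. by move=> gx; apply/Hepi; rewrite gx. Qed.

Lemma c_le0 i : c i <= 0.
Proof.
have [z /fineK gz] := Hfin; set tau := fine (g z) in gz.
rewrite leNgt; apply/negP => ci.
set s := (`|b i - vi i z tau| + 1) / c i.
have : (g z <= (tau + s)%:E)%E by rewrite -gz lee_fin lerDl divr_ge0 ?ltW // ltr_wpDl.
move/Hepi/(_ i); rewrite mulrDr /s mulrCA divff ?gt_eqF // mulr1 addrA.
have := ler_norm (b i - vi i z tau); rewrite /vi; lra.
Qed.

Lemma small_step z tau w s : g z = tau%:E -> TT z tau w s ->
  exists2 t0, 0 < t0 & forall t, 0 < t <= t0 -> (g (z + t *: w) <= (tau + t * s)%:E)%E.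
Proof.
move=> gz hT.
have H0 : forall i, True -> vi i z tau - b i <= 0 /\ (vi i z tau - b i = 0 -> vi i w s <= 0).
  move=> i _; split; first by rewrite subr_le0 epi_fin.
  by move/eqP; rewrite subr_eq0 => /eqP /hT.
have [t0 t00 Ht] := small_t H0.
exists t0 => // t ht; apply/Hepi => i.
have := Ht t ht i I; rewrite -/(vi i _ _) vi_lin; lra.
Qed.

Lemma quot_fin (rho tau t : R) :
  ((rho%:E - tau%:E) * (t^-1)%:E = ((rho - tau) / t)%:E)%E.
Proof. by rewrite -EFinB -EFinM. Qed.

Lemma quot_infty (tau t : R) : 0 < t -> ((+oo - tau%:E) * (t^-1)%:E = +oo)%E.
Proof. by move=> t0; rewrite addye // gt0_mulye // lte_fin invr_gt0. Qed.

Lemma subdiff_char z tau l : g z = tau%:E ->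
  (subdiff g z l <-> forall w s, TT z tau w s -> inner l w <= s).
Proof.
move=> gz; split.
  move=> [_ Hl] w s hT.
  have [t0 t00 Ht] := small_step gz hT.
  have h1 := Ht t0; have {h1}h1 := h1 ltac:(by rewrite t00 lexx).
  have h2 := Hl (z + t0 *: w).
  have : ((tau + inner l (t0 *: w))%:E <= (tau + t0 * s)%:E)%E.
    apply: le_trans h1; move: h2; rewrite gz EFinD.
    by have -> : z + t0 *: w - z = t0 *: w by rewrite addrC addKr.
  by rewrite lee_fin lerD2l inner_scaler ler_pM2l.
move=> H; split; first by rewrite gz.
move=> x; case E: (g x) => [rho| |]; last by case: (Hnm E).
  rewrite gz -EFinD lee_fin -lerBrDl.
  apply: H => i hi; rewrite vi_sub hi subr_le0; exact: epi_fin.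
exact: leey.
Qed.


Definition Squot (z w : vec) (e : R) : set (\bar R) :=
  [set x | exists (t : R) (w' : vec),
         0 < t < e /\ vnorm (w' - w) < e /\
         x = ((g (z + t *: w') - g z) * (t^-1)%:E)%E].

Lemma min1_sq (eta : R) : 0 < eta -> (Num.min 1 eta) ^+ 2 <= eta.
Proof.
move=> e0; have [h|h] := lerP 1 eta.
  by rewrite expr1n.
by rewrite expr2 ler_piMl // ltW.
Qed.

Lemma SD1 z tau w s : g z = tau%:E -> TT z tau w s -> (subderiv g z w <= s%:E)%E.
Proof.
move=> gz hT; rewrite /subderiv; apply: ge_ereal_sup => _ [e e0 <-].
have [t0 t00 Ht] := small_step gz hT.
set t := Num.min t0 (e / 2).
have t0' : 0 < t by rewrite lt_min t00 divr_gt0.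
have ht : t <= t0 by rewrite ge_min lexx.
have hte : t < e by rewrite gt_min; apply/orP; right; rewrite ltr_pdivrMr // ltr_pMr // ltr1n.
apply: (le_trans (y := ((g (z + t *: w) - g z) * (t^-1)%:E)%E)).
  apply: ereal_inf_lbound; exists t, w; split; first by rewrite t0' hte.
  by split => //; rewrite subrr /vnorm /sqnorm inner0r sqrtr0.
have := Ht t ltac:(by rewrite t0' ht).
case E: (g (z + t *: w)) => [rho| |]; last by case: (Hnm E).
  rewrite gz quot_fin !lee_fin => h; rewrite ler_pdivrMr // mulrC; lra.
by rewrite leye_eq.
Qed.

Lemma SD2 z tau l w : g z = tau%:E -> subdiff g z l -> ((inner l w)%:E <= subderiv g z w)%E.
Proof.
move=> gz [_ Hl].
apply/lee_addgt0Pr => eps eps0; rewrite -leeBlDr //.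
have [eta eta0 Heta] := inner_small (- l) eps0.
set e := Num.min 1 eta.
have e0 : 0 < e by rewrite lt_min ltr01.
have e2 : e ^+ 2 <= eta by apply: min1_sq.
rewrite /subderiv; apply: le_trans (ereal_sup_ubound _); last by exists e.
apply: le_ereal_inf_tmp => _ [t [w' [/andP[t0 _] [hw ->]]]].
have hw2 : sqnorm (w' - w) < eta.
  by apply: lt_le_trans e2; rewrite -vnorm_lt.
have := Heta _ hw2; rewrite inner_oppl inner_subr => hlw.
have := Hl (z + t *: w').
have -> : z + t *: w' - z = t *: w' by rewrite addrC addKr.
case E: (g (z + t *: w')) => [rho| |]; last by case: (Hnm E).
  rewrite gz quot_fin -EFinD -EFinB !lee_fin inner_scaler => h.
  rewrite ler_pdivlMr //.
  have : t * (inner l w - eps) <= t * inner l w' by rewrite ler_pM2l //; lra.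
  lra.
by move=> _; rewrite gz quot_infty // leey.
Qed.

Lemma SD3 z tau w s : g z = tau%:E -> ~ TT z tau w s -> (s%:E < subderiv g z w)%E.
Proof.
move=> gz /existsNP [i /not_implyP [hi /negP]]; rewrite -ltNge => hpos.
set gam := vi i w s.
set del := gam / (3 * (`|c i| + 1)).
have cpos : 0 < `|c i| + 1 by rewrite ltr_wpDl.
have del0 : 0 < del by rewrite divr_gt0 // mulr_gt0.
have cn : `|c i| = - c i by rewrite ler0_norm ?c_le0.
have hd : (- c i + 1) * del = gam / 3.
  by rewrite /del -cn; field; rewrite gt_eqF.
have cdel : - (gam / 3) <= c i * del by nra.
have [eta eta0 Heta] := inner_small (- A i) (divr_gt0 hpos (ltr0n R 3)).
set e := Num.min 1 eta.
have e0 : 0 < e by rewrite lt_min ltr01.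
have e2 : e ^+ 2 <= eta by apply: min1_sq.
apply: (lt_le_trans (y := (s + del)%:E)); first by rewrite lte_fin ltrDl.
rewrite /subderiv; apply: le_trans (ereal_sup_ubound _); last by exists e.
apply: le_ereal_inf_tmp => _ [t [w' [/andP[t0 _] [hw ->]]]].
have hw2 : sqnorm (w' - w) < eta.
  by apply: lt_le_trans e2; rewrite -vnorm_lt.
have := Heta _ hw2; rewrite inner_oppl inner_subr => hA.
have hv : 0 < vi i w' (s + del).
  have hg : gam = inner (A i) w + c i * s by [].
  have hg2 : vi i w s = gam by [].
  rewrite /vi mulrDr; lra.
case E: (g (z + t *: w')) => [rho| |]; last by case: (Hnm E).
  rewrite gz quot_fin lee_fin ler_pdivlMr //.
  have [//|hlt] := lerP ((s + del) * t) (rho - tau).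
  exfalso.
  have h1 := epi_fin E i.
  have h2 : vi i (z + t *: w') (tau + t * (s + del)) = b i + t * vi i w' (s + del).
    by rewrite vi_lin hi.
  have h3 : c i * rho >= c i * (tau + t * (s + del)).
    by rewrite ler_wnM2l ?c_le0 //; lra.
  have h4 : 0 < t * vi i w' (s + del) by rewrite mulr_gt0.
  move: h1 h2 h3 h4; rewrite /vi; lra.
by rewrite gz quot_infty // leey.
Qed.

Lemma crit_char z tau l w : g z = tau%:E -> subdiff g z l ->
  (crit_cone g z l w <-> TT z tau w (inner l w)).
Proof.
move=> gz hl; split.
  move=> hc; apply: contrapT => hn.
  by have := SD3 gz hn; rewrite -hc ltxx.
move=> hT; apply/eqP; rewrite eq_le (SD2 _ gz hl) /=; exact: SD1 hT.
Qed.


Lemma gfin_act z tau : g z = tau%:E -> exists i, vi i z tau = b i /\ c i < 0.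
Proof.
move=> gz; apply: contrapT => hn.
have H0 : forall i, True -> vi i z tau - b i <= 0 /\ (vi i z tau - b i = 0 -> - c i <= 0).
  move=> i _; split; first by rewrite subr_le0 epi_fin.
  move/eqP; rewrite subr_eq0 => /eqP hi; rewrite oppr_le0 leNgt; apply/negP => ci.
  by apply: hn; exists i.
have [t0 t00 Ht] := small_t H0.
have : (g z <= (tau - t0)%:E)%E.
  apply/Hepi => i; have := Ht t0 ltac:(by rewrite t00 lexx) i I; rewrite /vi; lra.
by rewrite gz lee_fin; lra.
Qed.

Section Main.
Variables (zb lb : vec) (tb : R).
Hypothesis gzb : g zb = tb%:E.
Hypothesis hlb : subdiff g zb lb.

Definition Ab i := vi i zb tb = b i.
Definition Tb w s := TT zb tb w s.
Definition Qb (l : vec) := forall w s, Tb w s -> inner l w <= s.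
Definition Kb x := Tb x (inner lb x).

Lemma Qlb : Qb lb.
Proof. by move=> w s; apply: (proj1 (subdiff_char _ gzb)). Qed.

Lemma KL : exists2 eps, 0 < eps & forall l, Qb l -> sqnorm (l - lb) < eps ->
  forall x, Tb x (inner l x) -> Kb x.
Proof.
have := fin_eps (T := {set 'I_k}) (P := fun S e => forall l, Qb l -> sqnorm (l - lb) < e ->
   forall x, Tb x (inner l x) -> (forall i, Ab i -> (i \in S) = (vi i x (inner l x) == 0)) ->
   inner l x = inner lb x).
case.
  move=> S.
  have [[w0 [s0 [[hT0 hF0] hpos]]] | hno] := pselect (exists w0 s0,
     (Tb w0 s0 /\ forall i, Ab i -> i \in S -> vi i w0 s0 = 0) /\ 0 < s0 - inner lb w0).
    have [eta eta0 Heta] := inner_small w0 hpos.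
    exists eta => // e' /andP[e'0 e'le] l Ql hll x hx hS; exfalso.
    have al0 : forall i, Ab i -> vi i x (inner l x) <= 0 /\
        (vi i x (inner l x) = 0 -> vi i x (inner l x) - vi i w0 s0 <= 0).
      move=> i hi; split; first exact: hx.
      move=> h0; rewrite h0 hF0 // ?subrr // hS //; exact/eqP.
    have [t0 t00 Ht] := small_t al0.
    have hT : Tb (x + t0 *: (x - w0)) (inner l x + t0 * (inner l x - s0)).
      move=> i hi; rewrite vi_lin vi_sub; apply: Ht => //; by rewrite t00 lexx.
    have h1 := Ql _ _ hT.
    rewrite inner_addr inner_scaler inner_subr in h1.
    have h2 := Ql _ _ hT0.
    have h3 : s0 <= inner l w0.
      have : t0 * s0 <= t0 * inner l w0 by nra.
      by rewrite ler_pM2l.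
    have h4 : inner w0 (l - lb) < s0 - inner lb w0 by apply: Heta; apply: lt_le_trans e'le.
    by move: h4; rewrite inner_sym inner_subl; lra.
  exists 1 => // e' _ l Ql hll x hx hS.
  have h1 : inner l x <= inner lb x.
    rewrite leNgt; apply/negP => hlt; apply: hno; exists x, (inner l x); split; last by rewrite subr_gt0.
    split => // i hi hiS; apply/eqP; rewrite -hS //.
  have h2 := Qlb hx.
  by apply/eqP; rewrite eq_le h1 h2.
move=> eps eps0 Heps; exists eps => // l Ql hll x hx.
have := Heps eps ltac:(by rewrite eps0 lexx) [set i : 'I_k | vi i x (inner l x) == 0]%SET l Ql hll x hx.
move=> H; rewrite /Kb -H //.
by move=> i _; rewrite inE.
Qed.


Lemma Kb_scale a x : 0 < a -> Kb x -> Kb (a *: x).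
Proof.
move=> a0 hx i hi; rewrite inner_scaler vi_scale; apply: mulr_ge0_le0; [exact: ltW|exact: hx].
Qed.

Lemma Kb_add x y : Kb x -> Kb y -> Kb (x + y).
Proof. by move=> hx hy i hi; rewrite inner_addr vi_add; have := hx i hi; have := hy i hi; lra. Qed.

Section Near.
Variables (z l : vec) (tau : R).
Hypothesis gz : g z = tau%:E.
Hypothesis hl : subdiff g z l.
Hypothesis hact : forall i, vi i z tau = b i -> Ab i.

Let u := z - zb.
Let sg := tau - tb.

Lemma vi_u i : Ab i -> vi i u sg = vi i z tau - b i.
Proof. by move=> hi; rewrite /u /sg vi_sub hi. Qed.

Lemma Tb_u : Tb u sg.
Proof. by move=> i hi; rewrite vi_u // subr_le0 epi_fin. Qed.

Lemma Qz_u y : (forall w s, TT z tau w s -> inner y w <= s) -> inner y u = sg.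
Proof.
move=> Hy; apply/eqP; rewrite eq_le; apply/andP; split.
  by apply: Hy => i hi; rewrite (vi_u (hact hi)) hi subrr.
have : inner y (- u) <= - sg.
  by apply: Hy => i hi; rewrite vi_opp (vi_u (hact hi)) hi subrr oppr0.
by rewrite inner_oppr lerN2.
Qed.

Lemma Qz_Qb y : (forall w s, TT z tau w s -> inner y w <= s) -> Qb y.
Proof.
move=> Hy x s hx.
have h : inner y (x - u) <= s - sg.
  apply: Hy => i hi; rewrite vi_sub (vi_u (hact hi)) hi subrr subr0; exact: hx (hact hi).
by move: h; rewrite inner_subr (Qz_u Hy); lra.
Qed.

Lemma Hlz : forall w s, TT z tau w s -> inner l w <= s.
Proof. exact: (proj1 (subdiff_char _ gz)). Qed.

Lemma shift w s : TT z tau w s -> exists2 t, 0 < t & Tb (u + t *: w) (sg + t * s).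
Proof.
move=> hT.
have H0 : forall i, Ab i -> vi i z tau - b i <= 0 /\ (vi i z tau - b i = 0 -> vi i w s <= 0).
  move=> i _; split; first by rewrite subr_le0 epi_fin.
  by move/eqP; rewrite subr_eq0 => /eqP /hT.
have [t0 t00 Ht] := small_t H0.
exists t0 => // i hi; rewrite vi_lin vi_u //; apply: Ht => //; by rewrite t00 lexx.
Qed.

Lemma claim1 w : Kb w -> Kb (- w) -> TT z tau w (inner l w).
Proof.
move=> h1 h2.
have h0 : forall i, Ab i -> vi i w (inner lb w) = 0.
  move=> i hi; apply/eqP; rewrite eq_le h1 //=.
  by have := h2 i hi; rewrite inner_oppr vi_opp oppr_le0.
have e1 : inner l w <= inner lb w by apply: Hlz => i hi; rewrite (h0 _ (hact hi)).
have e2 : inner l (- w) <= - inner lb w.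
  by apply: Hlz => i hi; rewrite vi_opp (h0 _ (hact hi)) oppr0.
have -> : inner l w = inner lb w by move: e2; rewrite inner_oppr; lra.
by move=> i hi; rewrite (h0 _ (hact hi)).
Qed.

Lemma claim2 eps : (forall l, Qb l -> sqnorm (l - lb) < eps -> forall x, Tb x (inner l x) -> Kb x) ->
  sqnorm (l - lb) < eps -> forall w, TT z tau w (inner l w) ->
  exists u0 v0, Kb u0 /\ Kb v0 /\ w = u0 - v0.
Proof.
move=> HK hll w hw.
have Ql := Qz_Qb Hlz.
have lu := Qz_u Hlz.
have [t t0 ht] := shift hw.
have k1 : Kb (u + t *: w).
  apply: (HK l Ql hll); rewrite inner_addr inner_scaler lu; exact: ht.
have k2 : Kb u by apply: (HK l Ql hll); rewrite lu; exact: Tb_u.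
exists (t^-1 *: (u + t *: w)), (t^-1 *: u); split; first by apply: Kb_scale; rewrite ?invr_gt0.
split; first by apply: Kb_scale; rewrite ?invr_gt0.
by rewrite -scalerBr addrC addKr scalerA mulVf ?gt_eqF // scale1r.
Qed.

Lemma Ku eps : (forall l, Qb l -> sqnorm (l - lb) < eps -> forall x, Tb x (inner l x) -> Kb x) ->
  sqnorm (l - lb) < eps -> Kb u /\ inner l u = sg /\ Qb l.
Proof.
move=> HK hll.
have Ql := Qz_Qb Hlz.
have lu := Qz_u Hlz.
split; last by [].
by apply: (HK l Ql hll); rewrite lu; exact: Tb_u.
Qed.

Lemma Qb_Qz eps y : (forall l, Qb l -> sqnorm (l - lb) < eps -> forall x, Tb x (inner l x) -> Kb x) ->
  sqnorm (l - lb) < eps -> (forall x, Kb x -> Kb (- x)) -> Qb y ->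
  forall w s, TT z tau w s -> inner y w <= s.
Proof.
move=> HK hll Hsym Qy w s hT.
have [ku [lu Ql]] := Ku HK hll.
have yu : forall y', Qb y' -> inner y' u = inner lb u.
  move=> y' Qy'; apply/eqP; rewrite eq_le Qy' //=.
  by have := Qy' _ _ (Hsym _ ku); rewrite !inner_oppr lerN2.
have [t t0 ht] := shift hT.
have := Qy _ _ ht; rewrite inner_addr inner_scaler yu // -(yu l Ql) lu.
by rewrite lerD2l ler_pM2l.
Qed.

End Near.

Lemma Kb_sym : rel_int (subdiff g zb) lb -> forall x, Kb x -> Kb (- x).
Proof.
move=> [_ [e [e0 He]]] x hx.
have step : forall l', Qb l' -> inner lb x <= inner l' x.
  move=> l' Ql'.
  set N := sqnorm (lb - l').
  have N0 : 0 <= N by apply: sqnorm_ge0.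
  set s := e / (N + 1).
  have s0 : 0 < s by rewrite divr_gt0 // ltr_wpDl.
  set y := (1 + s) *: lb - s *: l'.
  have hy : subdiff g zb y.
    apply: He.
      exists 2%N, (fun i : 'I_2 => if i == ord0 then lb else l'),
        (fun i : 'I_2 => if i == ord0 then 1 + s else - s).
      split.
        move=> i; case: ifP => _ //; apply/(subdiff_char _ gzb) => w0 s1 hw.
        exact: Ql'.
      split; first by rewrite big_ord_recr big_ord1 /=; ring.
      by rewrite big_ord_recr big_ord1 /= scaleNr.
    rewrite vnorm_lt //.
    have -> : y - lb = s *: (lb - l') by apply/rowP => j; rewrite /y !mxE; ring.
    rewrite sqnorm_scale -/N /s expr_div_n.
    rewrite mulrAC ltr_pdivrMr ?exprn_gt0 ?ltr_wpDl //.
    rewrite ltr_pM2l ?exprn_gt0 //.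
    by rewrite expr2; nra.
  have := (proj1 (subdiff_char _ gzb) hy) _ _ hx.
  rewrite /y inner_addl inner_oppl !inner_scalel mulrDl mul1r.
  move=> h; have : s * inner lb x <= s * inner l' x by lra.
  by rewrite ler_pM2l.
have [i0 [hi0 ci0]] := gfin_act gzb.
set a0 := (- c i0)^-1 *: A i0.
have Qa : forall j, Ab j -> c j < 0 -> Qb ((- c j)^-1 *: A j).
  move=> j hj cj w s hw; have := hw j hj; rewrite /vi inner_scalel => h.
  rewrite ler_pdivrMl ?oppr_gt0 //; lra.
have Qa0 := Qa i0 hi0 ci0.
have h0 : forall i, Ab i -> vi i x (inner lb x) = 0.
  move=> i hi; apply/eqP; rewrite eq_le hx //=.
  have [ci|ci] := ltrP (c i) 0.
    have := step _ (Qa i hi ci); rewrite inner_scalel ler_pdivlMl ?oppr_gt0 // /vi; lra.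
  have ce : c i = 0 by apply/eqP; rewrite eq_le ci c_le0.
  have Qs : Qb (a0 + A i).
    move=> w s hw; rewrite inner_addl; have := Qa0 _ _ hw; have := hw i hi.
    rewrite /vi ce mul0r addr0; lra.
  have := step _ Qs; rewrite inner_addl.
  have : inner a0 x <= inner lb x by exact: Qa0 hx.
  rewrite /vi ce mul0r addr0; lra.
by move=> i hi; rewrite inner_oppr vi_opp h0 // oppr0.
Qed.


Lemma choose_r (eta : R) : 0 < eta -> exists2 r, 0 < r & r ^+ 2 < eta.
Proof.
move=> e0; exists (Num.min 1 (eta / 2)); first by rewrite lt_min ltr01 divr_gt0.
have h : Num.min 1 (eta / 2) ^+ 2 <= eta / 2.
  have [h|h] := lerP 1 (eta / 2); first by rewrite expr1n.
  by rewrite expr2 ler_piMl // ?ltW // divr_gt0.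
by apply: le_lt_trans h _; rewrite ltr_pdivrMr // ltr_pMr // ltr1n.
Qed.

Lemma ball_split r z l : in_ball2 r zb lb z l ->
  sqnorm (z - zb) <= r ^+ 2 /\ sqnorm (l - lb) <= r ^+ 2.
Proof.
rewrite /in_ball2 => h; have := sqnorm_ge0 (z - zb); have := sqnorm_ge0 (l - lb).
move: h; lra.
Qed.

Lemma inact_eta : exists2 eta, 0 < eta & forall v, sqnorm v < eta -> forall i, ~ Ab i ->
  inner (A i + c i *: lb) v < b i - vi i zb tb.
Proof.
have := fin_eps (T := 'I_k) (P := fun i e => forall v, sqnorm v < e -> ~ Ab i ->
  inner (A i + c i *: lb) v < b i - vi i zb tb).
case.
  move=> i; have [hi|hi] := pselect (Ab i); first by exists 1 => // e' _ v _ /(_ hi).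
  have sl : 0 < b i - vi i zb tb.
    rewrite subr_gt0 lt_neqAle epi_fin // andbT; apply/eqP => h; exact: hi.
  have [eta eta0 Heta] := inner_small (A i + c i *: lb) sl.
  exists eta => // e' /andP[_ he'] v hv _; apply: Heta; exact: lt_le_trans he'.
move=> e e0 He; exists e => // v hv i; apply: He hv; by rewrite e0 lexx.
Qed.

Lemma near_act eta z l : (forall v, sqnorm v < eta -> forall i, ~ Ab i ->
    inner (A i + c i *: lb) v < b i - vi i zb tb) ->
  subdiff g z l -> sqnorm (z - zb) < eta ->
  g z = (fine (g z))%:E /\ forall i, vi i z (fine (g z)) = b i -> Ab i.
Proof.
move=> Heta [fz _] hz; have gz := esym (fineK fz); split => //.
set tau := fine (g z) in gz |- *.
move=> i hi; apply: contrapT => nA.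
have h1 := Heta _ hz i nA.
have h2 : tb + inner lb (z - zb) <= tau.
  by have := proj2 hlb z; rewrite gzb gz -EFinD lee_fin.
have h3 : vi i z tau = vi i zb tb + vi i (z - zb) (tau - tb) by rewrite vi_sub; ring.
have h4 : c i * (tau - tb) <= c i * inner lb (z - zb).
  by rewrite ler_wnM2l ?c_le0 //; lra.
move: h1 h3 h4 hi; rewrite inner_addl inner_scalel /vi; lra.
Qed.

Lemma main_ab :
  (exists r : R, 0 < r /\
     forall z l : vec, subdiff g z l -> in_ball2 r zb lb z l ->
       crit_cone g z l `<=` set_diff_minkowski (crit_cone g zb lb) /\
       crit_cone g zb lb `&` set_opp (crit_cone g zb lb) `<=` crit_cone g z l) /\
  (rel_int (subdiff g zb) lb ->
   exists r : R, 0 < r /\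
     forall z l : vec, subdiff g z l -> in_ball2 r zb lb z l ->
       rel_int (subdiff g z) l /\ crit_cone g z l = crit_cone g zb lb).
Proof.
have [eps eps0 HK] := KL.
have [eta eta0 Heta] := inact_eta.
have me0 : 0 < Num.min eps eta by rewrite lt_min eps0 eta0.
split.
  have [r r0 hr] := choose_r me0.
  exists r; split => // z l hl hb.
  have [hz hll] := ball_split hb.
  have hz' : sqnorm (z - zb) < eta.
    by apply: le_lt_trans hz _; apply: lt_le_trans hr _; rewrite ge_min lexx orbT.
  have hll' : sqnorm (l - lb) < eps.
    by apply: le_lt_trans hll _; apply: lt_le_trans hr _; rewrite ge_min lexx.
  have [gz hact] := near_act Heta hl hz'.
  split.
    move=> w /(crit_char w gz hl) hw.
    have [u0 [v0 [k1 [k2 ->]]]] := claim2 gz hl hact HK hll' hw.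
    by exists u0, v0; split; [apply/(crit_char _ gzb hlb)|split => //; apply/(crit_char _ gzb hlb)].
  move=> w [/(crit_char w gzb hlb) h1 /(crit_char (- w) gzb hlb) h2].
  by apply/(crit_char w gz hl); exact: (claim1 gz hl hact h1 h2).
move=> hri; have hri' := hri; case: hri' => [_ [e [e0 He]]].
have e40 : 0 < e ^+ 2 / 4 by rewrite divr_gt0 ?exprn_gt0.
have mm0 : 0 < Num.min (Num.min eps eta) (e ^+ 2 / 4) by rewrite lt_min me0 e40.
have [r r0 hr] := choose_r mm0.
exists r; split => // z l hl hb.
have [hz hll] := ball_split hb.
have hr1 : r ^+ 2 < Num.min eps eta by apply: lt_le_trans hr _; rewrite ge_min lexx.
have hr2 : r ^+ 2 < e ^+ 2 / 4 by apply: lt_le_trans hr _; rewrite ge_min lexx orbT.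
have hz' : sqnorm (z - zb) < eta.
  by apply: le_lt_trans hz _; apply: lt_le_trans hr1 _; rewrite ge_min lexx orbT.
have hll' : sqnorm (l - lb) < eps.
  by apply: le_lt_trans hll _; apply: lt_le_trans hr1 _; rewrite ge_min lexx.
have hll2 : sqnorm (l - lb) < e ^+ 2 / 4 by apply: le_lt_trans hr2.
have [gz hact] := near_act Heta hl hz'.
have Hsym := Kb_sym hri.
split.
  have Eq : subdiff g z = subdiff g zb.
    apply/funext => y; apply/propext; split.
      move/(subdiff_char _ gz) => Hy; apply/(subdiff_char _ gzb).
      exact: (Qz_Qb hact Hy).
    move/(subdiff_char _ gzb) => Hy; apply/(subdiff_char _ gz).
    exact: (Qb_Qz gz hl hact HK hll' Hsym Hy).
  rewrite Eq; split; first by rewrite -Eq.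
  exists (e / 2); split; first by rewrite divr_gt0.
  move=> y hy hyl; apply: He => //.
  rewrite vnorm_lt //.
  have -> : y - lb = (y - l) + (l - lb) by rewrite addrA subrK.
  apply: le_lt_trans (sqnorm_add_le _ _) _.
  move: hyl; rewrite vnorm_lt ?divr_gt0 // => hyl.
  have h4 : (e / 2) ^+ 2 = e ^+ 2 / 4 by rewrite !expr2; field.
  rewrite h4 in hyl.
  move: hyl hll2; lra.
apply/seteqP; split => w.
  move/(crit_char w gz hl) => hw.
  have [u0 [v0 [k1 [k2 ->]]]] := claim2 gz hl hact HK hll' hw.
  apply/(crit_char _ gzb hlb); exact: Kb_add k1 (Hsym _ k2).
move/(crit_char w gzb hlb) => hw; apply/(crit_char w gz hl).
exact: (claim1 gz hl hact hw (Hsym _ hw)).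
Qed.

End Main.
End Poly.

Theorem corollary3p4 (R : realType) (m : nat) (g : 'rV[R]_m -> \bar R)
    (zb lb : 'rV[R]_m) :
  polyhedral_fun g -> subdiff g zb lb ->
  (exists r : R, 0 < r /\
     forall z l : 'rV[R]_m, subdiff g z l -> in_ball2 r zb lb z l ->
       crit_cone g z l `<=` set_diff_minkowski (crit_cone g zb lb) /\
       crit_cone g zb lb `&` set_opp (crit_cone g zb lb) `<=` crit_cone g z l) /\
  (rel_int (subdiff g zb) lb ->
   exists r : R, 0 < r /\
     forall z l : 'rV[R]_m, subdiff g z l -> in_ball2 r zb lb z l ->
       rel_int (subdiff g z) l /\ crit_cone g z l = crit_cone g zb lb).
Proof.
move=> [[Hnm Hfin] [k [A [c [b Hpoly]]]]] hlb.
have Hepi : forall x t, (g x <= t%:E)%E <-> (forall i, inner (A i) x + c i * t <= b i).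
  by move=> x t; exact: (Hpoly (x, t)).
have fzb := proj1 hlb.
have gzb := esym (fineK fzb).
apply: main_ab; eassumption.
Qed.
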